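(* Construct matrix $\check{\boldsymbol{\mathcal{A}}} \in \mathbb{R}^{4 s n^2\times 4 s n^2}$ with its $ij$-th $4n^2 \times 4n^2$ block given by $[\check{\boldsymbol{\mathcal{A}}}]_{ij}:= \mathbf{T}(j,i) \cdot \begin{bmatrix} \mathbf{A}_j & \\ & \mathbf{A}_j \end{bmatrix} \otimes \begin{bmatrix} \mathbf{A}_j & \\ & \mathbf{A}_j \end{bmatrix}$. Then, for all $k \in \mathbb{N}$, $\|\check{\boldsymbol{\mathcal{A}}}^k\| \leq \tau \rho^k$.
   Context: Let $\mathbf{A}_1,\dots,\mathbf{A}_s\in\mathbb{R}^{n\times n}$ be the state matrices of an MJS with Markov transition matrix $\mathbf{T}\in\mathbb{R}^{s\times s}$. Define the augmented matrix $\boldsymbol{\mathcal{A}}\in\mathbb{R}^{sn^2\times sn^2}$ with $ij$-th $n^2\times n^2$ block $\mathbf{T}(j,i)\,\mathbf{A}_j\otimes\mathbf{A}_j$. For any $\rho\ge\rho(\boldsymbol{\mathcal{A}})$ (spectral radius), let $\tau:=\sup_{k\in\mathbb{N}}\|\boldsymbol{\mathcal{A}}^k\|/\rho^k$, so that $\|\boldsymbol{\mathcal{A}}^k\|\le\tau\rho^k$ for all $k$. *)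

(* Defs.v *)
From HB Require Import structures.
From mathcomp Require Import all_boot all_order all_algebra.
From mathcomp Require Import all_classical all_reals.
From mathcomp Require Import mxtens complex.
Set Implicit Arguments. Unset Strict Implicit. Unset Printing Implicit Defensive.
Import Order.TTheory GRing.Theory Num.Theory.
Local Open Scope ring_scope.
Local Open Scope classical_set_scope.

Section Defs.
Variable R : realType.

Definition vnorm2 m (x : 'cV[R]_m) : R := Num.sqrt (\sum_i x i 0 ^+ 2).

Definition opnorm m p (M : 'M[R]_(m, p)) : R :=
  sup [set vnorm2 (M *m x) | x in [set x : 'cV[R]_p | vnorm2 x <= 1]].

Definition spectral_radius m (M : 'M[R]_m) : R :=
  sup [set ComplexField.Normc.normc z | z in
        [set z : R[i] | root (map_poly (real_complex R) (char_poly M)) z]].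

Definition markov_matrix s (T : 'M[R]_s) : Prop :=
  (forall i j, 0 <= T i j) /\ (forall i, \sum_j T i j = 1).

(* Block matrix in R^{s p x s p} whose ij-th p x p block is T(j,i) * B_j.
   Index k : 'I_(s*p) corresponds to block (k %/ p) and inner index (k %% p). *)
Definition aug_mx s p (T : 'M[R]_s) (B : 'I_s -> 'M[R]_p) : 'M[R]_(s * p) :=
  \matrix_(k, l) (T (mxtens_unindex l).1 (mxtens_unindex k).1
                  * B (mxtens_unindex l).1 (mxtens_unindex k).2 (mxtens_unindex l).2).

Definition calA s n (T : 'M[R]_s) (A : 'I_s -> 'M[R]_n) : 'M[R]_(s * (n * n)) :=
  aug_mx T (fun j => A j *t A j).

Definition diag2 n (M : 'M[R]_n) : 'M[R]_(n + n) := block_mx M 0 0 M.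

Definition calA_check s n (T : 'M[R]_s) (A : 'I_s -> 'M[R]_n)
  : 'M[R]_(s * ((n + n) * (n + n))) :=
  aug_mx T (fun j => diag2 (A j) *t diag2 (A j)).

Definition tau_of s n (T : 'M[R]_s) (A : 'I_s -> 'M[R]_n) (rho : R) : R :=
  sup (range (fun k : nat => opnorm (calA T A ^+ k) / rho ^+ k)).

End Defs.

(* Main.v *)
Require Import Defs.
From HB Require Import structures.
From mathcomp Require Import all_boot all_order all_algebra.
From mathcomp Require Import all_classical all_reals.
From mathcomp Require Import mxtens complex.
Import Order.TTheory GRing.Theory Num.Theory.
Local Open Scope ring_scope.
Local Open Scope classical_set_scope.
Set Implicit Arguments. Unset Strict Implicit.

Section Ana.
Variable R : realType.
Definition sqn {m} (x : 'cV[R]_m) : R := \sum_i x i 0 ^+ 2.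

Lemma sqn_ge0 m (x : 'cV[R]_m) : 0 <= sqn x.
Proof. by apply: sumr_ge0 => i _; apply: sqr_ge0. Qed.

Lemma vnormE m (x : 'cV[R]_m) : vnorm2 x = Num.sqrt (sqn x).
Proof. by []. Qed.

Lemma vnorm_ge0 m (x : 'cV[R]_m) : 0 <= vnorm2 x.
Proof. exact: sqrtr_ge0. Qed.

Lemma sqn_vnorm m (x : 'cV[R]_m) : sqn x = vnorm2 x ^+ 2.
Proof. by rewrite vnormE sqr_sqrtr // sqn_ge0. Qed.

Lemma sqnZ m c (x : 'cV[R]_m) : sqn (c *: x) = c ^+ 2 * sqn x.
Proof. by rewrite /sqn mulr_sumr; apply: eq_bigr => i _; rewrite mxE exprMn. Qed.

Lemma vnormZ m c (x : 'cV[R]_m) : vnorm2 (c *: x) = `|c| * vnorm2 x.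
Proof. by rewrite !vnormE sqnZ sqrtrM ?sqr_ge0 // sqrtr_sqr. Qed.

Lemma sqn0 m : sqn (0 : 'cV[R]_m) = 0.
Proof. by rewrite /sqn big1 // => i _; rewrite mxE expr0n. Qed.

Lemma entry_le m (x : 'cV[R]_m) i : x i 0 ^+ 2 <= sqn x.
Proof.
rewrite /sqn (bigD1 i) //= lerDl; apply: sumr_ge0 => j _; exact: sqr_ge0.
Qed.

Lemma sq_le (a b : R) : 0 <= a -> a <= b -> a ^+ 2 <= b ^+ 2.
Proof. by move=> a0 ab; rewrite !expr2 ler_pM. Qed.

Definition opset {m p} (M : 'M[R]_(m, p)) :=
  [set vnorm2 (M *m x) | x in [set x : 'cV[R]_p | vnorm2 x <= 1]].

Lemma opset_ub m p (M : 'M[R]_(m, p)) : has_ubound (opset M).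
Proof.
exists (Num.sqrt (\sum_i (\sum_j `|M i j|) ^+ 2)) => _ [x /= Hx <-].
rewrite vnormE; apply: ler_wsqrtr; apply: ler_sum => i _.
have hx : forall j, `|x j 0| <= 1.
  move=> j; have h1 : `|x j 0| ^+ 2 <= 1.
    rewrite real_normK ?num_real // (le_trans (entry_le x j)) //.
    by rewrite sqn_vnorm -(expr1n _ 2) sq_le // vnorm_ge0.
  rewrite leNgt; apply/negP => h2.
  move: h1; rewrite leNgt => /negP; apply.
  by rewrite -(expr1n _ 2) !expr2 ltr_pM.
rewrite -real_normK ?num_real //; apply: sq_le => //.
rewrite mxE (le_trans (ler_norm_sum _ _ _)) //; apply: ler_sum => j _.
by rewrite normrM ler_piMr.
Qed.

Lemma opnorm_ub m p (M : 'M[R]_(m, p)) x : vnorm2 x <= 1 -> vnorm2 (M *m x) <= opnorm M.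
Proof.
move=> Hx; apply: (sup_upper_bound (E := opset M)).
  by split; [exists (vnorm2 (M *m x)); exists x | exact: opset_ub].
by exists x.
Qed.

Lemma vnorm0 m : vnorm2 (0 : 'cV[R]_m) = 0.
Proof. by rewrite vnormE sqn0 sqrtr0. Qed.

Lemma opnorm_ge0 m p (M : 'M[R]_(m, p)) : 0 <= opnorm M.
Proof.
by rewrite -(vnorm0 m) -(mulmx0 _ M) opnorm_ub // vnorm0.
Qed.

Lemma opnorm_mul m p (M : 'M[R]_(m, p)) y : vnorm2 (M *m y) <= opnorm M * vnorm2 y.
Proof.
have [t0|tp] := eqVneq (vnorm2 y) 0.
  have sy : sqn y = 0 by rewrite sqn_vnorm t0 expr0n.
  have -> : y = 0.
    apply/matrixP => i j; rewrite ord1 mxE.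
    have := psumr_eq0P (fun i _ => sqr_ge0 (y i 0)) sy (i := i) erefl.
    by move/eqP; rewrite sqrf_eq0 => /eqP.
  by rewrite mulmx0 !vnorm0 mulr0.
have tpos : 0 < vnorm2 y by rewrite lt_def tp vnorm_ge0.
have h := opnorm_ub M (x := (vnorm2 y)^-1 *: y).
rewrite vnormZ ger0_norm ?invr_ge0 ?vnorm_ge0 // mulVf // lexx in h.
have {}h := h isT.
rewrite -scalemxAr vnormZ ger0_norm ?invr_ge0 ?vnorm_ge0 // mulrC in h.
by rewrite -ler_pdivrMr.
Qed.

Lemma opnorm_le m p (M : 'M[R]_(m, p)) b :
  (forall x, vnorm2 x <= 1 -> vnorm2 (M *m x) <= b) -> opnorm M <= b.
Proof.
move=> H; apply: ge_sup.
  by exists (vnorm2 (M *m 0)); exists 0 => //=; rewrite vnorm0.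
by move=> _ [x /= Hx <-]; apply: H.
Qed.
End Ana.

Arguments mxtens_unindex : simpl never.
Arguments mxtens_index : simpl never.
Section Comb.
Variable R : realType.
Variables (s n : nat).

Definition lr (b : bool) (a : 'I_n) : 'I_(n + n) :=
  unsplit (if b then inr a else inl a).
Definition ulr (a : 'I_(n + n)) : bool * 'I_n :=
  match fintype.split a with inl a' => (false, a') | inr a' => (true, a') end.
Lemma lrK b a : ulr (lr b a) = (b, a).
Proof. by rewrite /ulr /lr fintype.unsplitK; case: b. Qed.
Lemma ulrK a : lr (ulr a).1 (ulr a).2 = a.
Proof. by rewrite /ulr /lr; rewrite -[a in RHS]fintype.splitK; case: (fintype.split a). Qed.

Local Notation N := (s * (n * n))%N.
Local Notation NB := (s * ((n + n) * (n + n)))%N.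
Local Notation Q := (bool * bool)%type.

Lemma ui1 m k (x : 'I_m) (y : 'I_k) : (mxtens_unindex (mxtens_index (x, y))).1 = x.
Proof. by rewrite mxtens_indexK. Qed.
Lemma ui2 m k (x : 'I_m) (y : 'I_k) : (mxtens_unindex (mxtens_index (x, y))).2 = y.
Proof. by rewrite mxtens_indexK. Qed.
Lemma iu m k (z : 'I_(m * k)) :
  mxtens_index ((mxtens_unindex z).1, (mxtens_unindex z).2) = z.
Proof. by rewrite -surjective_pairing mxtens_unindexK. Qed.

Opaque mxtens_unindex mxtens_index.
Definition E (p : Q * 'I_N) : 'I_NB :=
  mxtens_index ((mxtens_unindex p.2).1,
    mxtens_index (lr p.1.1 (mxtens_unindex (mxtens_unindex p.2).2).1,
                  lr p.1.2 (mxtens_unindex (mxtens_unindex p.2).2).2)).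
Definition Einv (k : 'I_NB) : Q * 'I_N :=
  (((ulr (mxtens_unindex (mxtens_unindex k).2).1).1,
    (ulr (mxtens_unindex (mxtens_unindex k).2).2).1),
   mxtens_index ((mxtens_unindex k).1,
     mxtens_index ((ulr (mxtens_unindex (mxtens_unindex k).2).1).2,
                   (ulr (mxtens_unindex (mxtens_unindex k).2).2).2))).
Lemma EK : cancel E Einv.
Proof.
move=> [[b1 b2] u]; rewrite /E /Einv.
rewrite (_ : (b1, b2, u).2 = u) // (_ : (b1, b2, u).1.1 = b1) //.
rewrite (_ : (b1, b2, u).1.2 = b2) //.
rewrite !(ui1, ui2) !lrK.
set r := mxtens_unindex (mxtens_unindex u).2.
by rewrite /= /r iu iu.
Qed.
Lemma EinvK : cancel Einv E.
Proof.
move=> k; rewrite /E /Einv.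
rewrite [(_, _).2]/= [(_, _).1]/= [(_, _).1]/= [(_, _).2]/=.
by rewrite !(ui1, ui2) !ulrK !iu.
Qed.

Lemma sumE (F : 'I_NB -> R) :
  \sum_k F k = \sum_(q : Q) \sum_(u : 'I_N) F (E (q, u)).
Proof.
rewrite pair_bigA /= (reindex E) /=; last by exists Einv => x _; [apply: EK|apply: EinvK].
by apply: eq_bigr => -[q u].
Qed.

Variables (A : 'I_s -> 'M[R]_n) (T : 'M[R]_s).
Local Notation M := (calA T A).
Local Notation C := (calA_check T A).

Lemma diag2E (X : 'M[R]_n) b1 b2 a c :
  diag2 X (lr b1 a) (lr b2 c) = (b1 == b2)%:R * X a c.
Proof.
rewrite /diag2 /lr; case: b1; case: b2 => /=;
 rewrite ?block_mxEul ?block_mxEur ?block_mxEdl ?block_mxEdr ?mxE;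
 rewrite ?mul1r ?mul0r //.
Qed.

Lemma CE q q' u v : C (E (q, u)) (E (q', v)) = (q == q')%:R * M u v.
Proof.
rewrite /calA_check /calA /aug_mx /E [LHS]mxE [in RHS]mxE.
rewrite !(ui1, ui2) [in LHS]mxE [in RHS]mxE !(ui1, ui2) !diag2E.
case: q => [b1 b2]; case: q' => [b3 b4].
rewrite xpair_eqE (_ : (b1, b2).1 = b1) // (_ : (b1, b2).2 = b2) //.
rewrite (_ : (b3, b4).1 = b3) // (_ : (b3, b4).2 = b4) //.
by case: (b1 == b3); case: (b2 == b4); rewrite /= ?mul1r ?mul0r ?mulr0 ?mul1r.
Qed.

Lemma CkE k q q' u v :
  (C ^+ k) (E (q, u)) (E (q', v)) = (q == q')%:R * (M ^+ k) u v.
Proof.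
elim: k q u q' v => [|k IH] q u q' v.
  rewrite !expr0 !mxE (inj_eq (can_inj EK)) xpair_eqE.
  by case: (q == q'); case: (u == v); rewrite /= ?mul1r ?mul0r.
rewrite !exprS -!mulmxE mxE sumE [in RHS]mxE.
rewrite (bigD1 q) //= [X in _ + X]big1 ?addr0; last first.
  move=> q'' /negbTE Hq; apply: big1 => u'' _.
  by rewrite CE IH eq_sym Hq !mul0r.
rewrite mulr_sumr; apply: eq_bigr => u'' _.
by rewrite CE IH eqxx mul1r mulrCA.
Qed.

Definition xq (x : 'cV[R]_NB) (q : Q) : 'cV[R]_N := \col_u x (E (q, u)) 0.

Lemma CkxE k (x : 'cV[R]_NB) q u :
  ((C ^+ k) *m x) (E (q, u)) 0 = ((M ^+ k) *m xq x q) u 0.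
Proof.
rewrite !mxE sumE (bigD1 q) //= [X in _ + X]big1 ?addr0; last first.
  move=> q'' /negbTE Hq; apply: big1 => u'' _.
  by rewrite CkE eq_sym Hq !mul0r.
by apply: eq_bigr => v _; rewrite CkE eqxx mul1r mxE.
Qed.

Lemma sqnE (y : 'cV[R]_NB) : sqn y = \sum_q sqn (xq y q).
Proof.
by rewrite /sqn sumE; apply: eq_bigr => q _; apply: eq_bigr => u _; rewrite mxE.
Qed.

Lemma xqCk k (x : 'cV[R]_NB) q : xq ((C ^+ k) *m x) q = (M ^+ k) *m xq x q.
Proof. by apply/matrixP => u j; rewrite ord1 [LHS]mxE CkxE. Qed.

End Comb.

Theorem lemma12 (R : realType) (s n : nat) (A : 'I_s -> 'M[R]_n) (T : 'M[R]_s)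
  (rho : R) :
  markov_matrix T ->
  spectral_radius (calA T A) <= rho ->
  (forall k : nat, opnorm (calA T A ^+ k) <= tau_of T A rho * rho ^+ k) ->
  forall k : nat, opnorm (calA_check T A ^+ k) <= tau_of T A rho * rho ^+ k.
Proof.
move=> _ _ H k; apply: le_trans (H k).
apply: opnorm_le => x Hx.
set op := opnorm (calA T A ^+ k).
have op0 : 0 <= op by apply: opnorm_ge0.
rewrite vnormE -(ger0_norm op0) -sqrtr_sqr; apply: ler_wsqrtr.
rewrite sqnE.
apply: (le_trans (y := \sum_q op ^+ 2 * sqn (xq x q))).
  apply: ler_sum => q _; rewrite xqCk.
  have h := opnorm_mul (calA T A ^+ k) (xq x q).
  rewrite !sqn_vnorm -exprMn; apply: sq_le => //; exact: vnorm_ge0.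
rewrite -mulr_sumr -sqnE -[X in _ <= X]mulr1; apply: ler_wpM2l; first exact: sqr_ge0.
by rewrite sqn_vnorm -(expr1n _ 2) sq_le // vnorm_ge0.
Qed.
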